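(* Let $\mathcal C$ be a Clifford circuit with linear outcome code $\mathcal O(\mathcal C)$, let $F$ be a fault operator and $u\in\mathcal O(\mathcal C)^\perp$. Then $\sum_{j=1}^m u_j\,[\overrightarrow F_{\ell_j-0.5},S_j]\equiv[F,\overleftarrow{F(u)}]\pmod 2$; that is, the faults $F$ flip the value of the outcome check $u$ if and only if $[F,\overleftarrow{F(u)}]=1$.
   Context: A Clifford circuit on $n$ qubits is a finite sequence of operations, each a unitary Clifford gate or the measurement of a Hermitian $n$-qubit Pauli, each with a level in $\{1,2,\dots\}$; operations of equal level have disjoint supports and levels are nondecreasing; depth $\Delta$ = maximal level. In circuit order the $j$-th measurement measures $S_j$ at level $\ell_j$ ($j=1,\dots,m$); outcome $o_j=0$ for eigenvalue $+1$, $1$ for $-1$. The outcome code $\mathcal O(\mathcal C)$ is the set of outcome bit-strings occurring with nonzero probability for some input state; $\perp$ refers to $(u|v)=\sum u_iv_i\bmod 2$. $\overline{\mathcal P}_N$ is the $N$-qubit Pauli group modulo phases; $[P,Q]\in\mathbb Z_2$ is $0$ iff $P,Q$ commute. $U_\ell$ is the product of unitary gates of level $\ell$ (identity if none). Fault operators $F\in\overline{\mathcal P}_{n(\Delta+1)}$ act on qubits $(\ell+0.5,q)$, $0\le\ell\le\Delta$, $1\le q\le n$, with level components $F_{\ell+0.5}$; $\eta_{\ell+0.5}(P)$ is $P$ at level $\ell+0.5$ and $I$ elsewhere. Cumulant $\overrightarrow F$: start with $F$; for $\ell=1,\dots,\Delta$ replace $\overrightarrow F_{\ell+0.5}$ by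 $\overrightarrow F_{\ell+0.5}\cdot U_\ell\overrightarrow F_{\ell-0.5}U_\ell^{-1}$. Back-cumulant $\overleftarrow F$: start with $F$; for $\ell=\Delta,\dots,1$ replace $\overleftarrow F_{\ell-0.5}$ by $\overleftarrow F_{\ell-0.5}\cdot U_\ell^{-1}\overleftarrow F_{\ell+0.5}U_\ell$. $F(u)=\prod_j\eta_{\ell_j-0.5}(S_j^{u_j})$. The faults $F$ flip the $j$-th outcome iff $[\overrightarrow F_{\ell_j-0.5},S_j]=1$, and flip the check $u$ iff the sum of the flips over $j$ with $u_j=1$ is $1$ mod 2. *)

(* Defs.v *)
(* Clifford circuits modelled with genuine quantum semantics
   (matrices over algC on the 2^n-dimensional Hilbert space), Paulis modulo
   phases as pairs of F_2 row vectors (x | z). *)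
From HB Require Import structures.
From mathcomp Require Import all_boot all_order all_algebra algC.
Set Implicit Arguments. Unset Strict Implicit. Unset Printing Implicit Defensive.
Import Order.TTheory GRing.Theory Num.Theory.
Local Open Scope ring_scope.

(* An n-qubit Pauli modulo phases: X^x Z^z, encoded by (x, z). *)
Definition pauli (n : nat) := ('rV['F_2]_n * 'rV['F_2]_n)%type.
Definition pid n : pauli n := (0, 0).
Definition pmul n (p q : pauli n) : pauli n := (p.1 + q.1, p.2 + q.2).
Definition ppow n (p : pauli n) (a : 'F_2) : pauli n := (a *: p.1, a *: p.2).
(* [P,Q] in Z_2 : 0 iff P and Q commute *)
Definition pcomm n (p q : pauli n) : 'F_2 :=
  \sum_(i < n) (p.1 ord0 i * q.2 ord0 i + p.2 ord0 i * q.1 ord0 i).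

Definition cmx n := 'M[algC]_(2 ^ n).
Definition qbit n (q : 'I_n) (a : 'I_(2 ^ n)) : bool := odd (a %/ 2 ^ q).
(* the matrix X^x Z^z *)
Definition pmat n (p : pauli n) : cmx n :=
  \matrix_(a, b)
    if [forall q, qbit q a == (qbit q b) (+) (p.1 ord0 q != 0%R)]
    then (-1) ^+ (\sum_(q < n) ((p.2 ord0 q != 0%R) && qbit q b))%N
    else 0.
(* the Hermitian Pauli (-1)^s i^{|x & z|} X^x Z^z *)
Definition hmat n (s : bool) (p : pauli n) : cmx n :=
  ((-1) ^+ s * 'i ^+ (\sum_(q < n) ((p.1 ord0 q != 0%R) && (p.2 ord0 q != 0%R)))%N) *: pmat p.

Definition adjmx n (U : cmx n) : cmx n := (map_mx Num.conj U)^T.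
Definition unitary n (U : cmx n) : Prop := U *m adjmx U = 1%:M.
(* U is a Clifford unitary: unitary, and conjugation maps Paulis to Paulis up
   to a phase (M = c Q iff M Q is scalar, since Q^2 = +-1) *)
Definition clifford n (U : cmx n) : Prop :=
  unitary U /\ forall p : pauli n, exists q : pauli n,
    is_scalar_mx (U *m pmat p *m invmx U *m pmat q).
Definition conjP n (U : cmx n) (p : pauli n) : pauli n :=
  odflt (pid n) [pick q : pauli n | is_scalar_mx (U *m pmat p *m invmx U *m pmat q)].

Definition Xq n (q : 'I_n) : pauli n := (\row_i (i == q)%:R, 0).
Definition Zq n (q : 'I_n) : pauli n := (0, \row_i (i == q)%:R).
Definition gate_supp n (U : cmx n) : {set 'I_n} :=
  [set q | ~~ ((U *m pmat (Xq q) == pmat (Xq q) *m U) &&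
               (U *m pmat (Zq q) == pmat (Zq q) *m U))].
Definition pauli_supp n (p : pauli n) : {set 'I_n} :=
  [set q | (p.1 ord0 q != 0%R) || (p.2 ord0 q != 0%R)].

Inductive op (n : nat) :=
  | Gate of cmx n
  | Meas of bool & pauli n.    (* measurement of the Hermitian Pauli hmat s S *)

(* a circuit: operations in circuit order, each with its level *)
Definition circuit n := seq (op n * nat).

Definition op_supp n (o : op n) : {set 'I_n} :=
  match o with Gate U => gate_supp U | Meas _ P => pauli_supp P end.

Definition wf_circuit n (C : circuit n) : Prop :=
  [/\ all (fun o => 0 < o.2)%N C,
      sorted leq [seq o.2 | o <- C],
      (forall (i : 'I_(size C)) U,
         (nth (Gate 1%:M, 0%N) C i).1 = Gate U -> clifford U) &
      (forall i j : 'I_(size C), i != j ->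
         (nth (Gate 1%:M, 0%N) C i).2 = (nth (Gate 1%:M, 0%N) C j).2 ->
         [disjoint op_supp (nth (Gate 1%:M, 0%N) C i).1
                 & op_supp (nth (Gate 1%:M, 0%N) C j).1])].

Definition depth n (C : circuit n) : nat := \max_(o <- C) o.2.

Definition meas n (C : circuit n) : seq (bool * pauli n * nat) :=
  pmap (fun o => match o.1 with Meas s P => Some (s, P, o.2) | _ => None end) C.
Definition nmeas n (C : circuit n) : nat := size (meas C).
Definition measP n (C : circuit n) (j : nat) : pauli n :=
  (nth (false, pid n, 0%N) (meas C) j).1.2.
Definition measL n (C : circuit n) (j : nat) : nat :=
  (nth (false, pid n, 0%N) (meas C) j).2.

Definition Ulev n (C : circuit n) (l : nat) : cmx n :=
  foldl (fun acc o => match o with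
                      | (Gate U, l') => if l' == l then U *m acc else acc
                      | _ => acc end) 1%:M C.

Definition proj n (s : bool) (P : pauli n) (b : 'F_2) : cmx n :=
  (2%:R)^-1 *: (1%:M + (-1) ^+ (b != 0%R) *: hmat s P).
Fixpoint kraus n (ops : seq (op n * nat)) (o : seq 'F_2) : cmx n :=
  match ops with
  | [::] => 1%:M
  | (Gate U, _) :: t => kraus t o *m U
  | (Meas s P, _) :: t =>
      match o with
      | b :: o' => kraus t o' *m proj s P b
      | [::] => kraus t [::] *m proj s P 0
      end
  end.
Definition outcome_prob n (C : circuit n) (psi : 'cV[algC]_(2 ^ n))
    (o : 'rV['F_2]_(nmeas C)) : algC :=
  \sum_(i < 2 ^ n) `|(kraus C [seq o ord0 j | j <- enum 'I_(nmeas C)] *m psi) i 0| ^+ 2.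
Definition normalized n (psi : 'cV[algC]_(2 ^ n)) : Prop :=
  \sum_(i < 2 ^ n) `|psi i 0| ^+ 2 = 1.
Definition outcome_code n (C : circuit n) (o : 'rV['F_2]_(nmeas C)) : Prop :=
  exists psi, @normalized n psi /\ @outcome_prob n C psi o != 0.
Arguments outcome_code {n} C o.
Definition linear_code m (O : 'rV['F_2]_m -> Prop) : Prop :=
  O 0 /\ forall a b, O a -> O b -> O (a + b).
Definition in_perp m (O : 'rV['F_2]_m -> Prop) (u : 'rV['F_2]_m) : Prop :=
  forall o, O o -> \sum_(j < m) u ord0 j * o ord0 j = 0.

(* component i is the level i + 0.5, i = 0..Delta *)
Definition fault n (D : nat) := {ffun 'I_D.+1 -> pauli n}.
Definition fcomm n D (F G : fault n D) : 'F_2 := \sum_(i < D.+1) pcomm (F i) (G i).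

Fixpoint cumn n (C : circuit n) (F : nat -> pauli n) (l : nat) : pauli n :=
  match l with
  | 0 => F 0%N
  | l'.+1 => pmul (F l) (conjP (Ulev C l) (cumn C F l'))
  end.
Definition cumulant n (C : circuit n) (F : fault n (depth C)) : fault n (depth C) :=
  [ffun i : 'I_(depth C).+1 => cumn C (fun k => F (inord k)) i].

(* bk k = back-cumulant component at index depth - k *)
Fixpoint bkn n (C : circuit n) (F : nat -> pauli n) (k : nat) : pauli n :=
  match k with
  | 0 => F (depth C)
  | k'.+1 => pmul (F (depth C - k)%N)
                  (conjP (invmx (Ulev C (depth C - k')%N)) (bkn C F k'))
  end.
Definition backcumulant n (C : circuit n) (F : fault n (depth C)) : fault n (depth C) :=
  [ffun i : 'I_(depth C).+1 => bkn C (fun k => F (inord k)) (depth C - i)%N].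

Definition faultOf n (C : circuit n) (u : 'rV['F_2]_(nmeas C)) : fault n (depth C) :=
  [ffun i : 'I_(depth C).+1 =>
     \big[@pmul n / pid n]_(j < nmeas C | (measL C j).-1 == i)
        ppow (measP C j) (u ord0 j)].

Arguments cumulant {n} C F.
Arguments backcumulant {n} C F.
Arguments faultOf {n} C u.
Arguments fcomm {n D} F G.

(* Main.v *)
Require Import Defs.
From mathcomp Require Import all_boot all_order all_algebra algC.
From mathcomp Require Import zify.
Import GRing.Theory Num.Theory.
Local Open Scope ring_scope.

Lemma F2cases (a : 'F_2) : a = 0 \/ a = 1.
Proof. case: a => [[|[|k]]] //= H; [left|right]; by apply/val_inj. Qed.

Lemma F2addb (a b : 'F_2) : (a + b != 0) = (a != 0) (+) (b != 0).
Proof. by case: (F2cases a) => ->; case: (F2cases b) => ->. Qed.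
Lemma F2mulb (a b : 'F_2) : (a * b != 0) = (a != 0) && (b != 0).
Proof. by case: (F2cases a) => ->; case: (F2cases b) => ->. Qed.
Lemma F2eq (a b : 'F_2) : (a != 0) = (b != 0) -> a = b.
Proof. by case: (F2cases a) => ->; case: (F2cases b) => ->. Qed.

Definition sgn (a : 'F_2) : algC := (-1) ^+ (a != 0).
Lemma sgnD a b : sgn (a + b) = sgn a * sgn b.
Proof. by rewrite /sgn F2addb; case: (a != 0); case: (b != 0); rewrite /= ?expr0 ?expr1 ?mulr1 ?mul1r ?mulrNN ?mulr1. Qed.
Lemma sgn0 : sgn 0 = 1. Proof. by rewrite /sgn eqxx expr0. Qed.
Lemma sgn_sum (I : finType) (P : pred I) (f : I -> 'F_2) :
  sgn (\sum_(i | P i) f i) = \prod_(i | P i) sgn (f i).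
Proof. exact: (big_morph sgn sgnD sgn0). Qed.
Lemma sgnK a : sgn a * sgn a = 1.
Proof. by rewrite /sgn; case: (a != 0); rewrite ?expr0 ?expr1 ?mulr1 ?mulrNN ?mulr1. Qed.
Lemma N1neq1 : (-1 : algC) != 1.
Proof. apply/negP => /eqP H. have := @ltrN10 algC. by rewrite H ltr10. Qed.
Lemma sgn_inj a b : sgn a = sgn b -> a = b.
Proof.
rewrite /sgn => H; apply: F2eq; move: H.
case: (a != 0); case: (b != 0) => //; rewrite ?expr0 ?expr1 => H.
  by move: N1neq1; rewrite H eqxx.
by move: N1neq1; rewrite -H eqxx.
Qed.
Lemma sgn_neq0 a : sgn a != 0.
Proof. by rewrite /sgn expf_neq0 // oppr_eq0 oner_eq0. Qed.

Lemma expN1_sum (I : finType) (f : I -> bool) :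
  (-1 : algC) ^+ (\sum_i f i)%N = \prod_i (-1) ^+ f i.
Proof. exact: (big_morph (fun k : nat => (-1 : algC) ^+ k) (@exprD _ _) (expr0 _)). Qed.
Lemma bits_inj_nat n : forall a b, (a < 2 ^ n)%N -> (b < 2 ^ n)%N ->
  (forall q, (q < n)%N -> odd (a %/ 2 ^ q) = odd (b %/ 2 ^ q)) -> a = b.
Proof.
elim: n => [|n IH] a b.
  by rewrite expn0 !ltnS !leqn0 => /eqP -> /eqP ->.
move=> Ha Hb H.
have H0 : odd a = odd b by have := H 0%N isT; rewrite expn0 !divn1.
have E : a./2 = b./2.
  apply: IH.
  - by rewrite -divn2 ltn_divLR // -expnSr.
  - by rewrite -divn2 ltn_divLR // -expnSr.
  move=> q Hq; rewrite -!divn2 -!divnMA -expnS; exact: H.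
by rewrite -(odd_double_half a) -(odd_double_half b) H0 E.
Qed.

Section Bits.
Variable n : nat.
Definition bitsv (a : 'I_(2 ^ n)) : {ffun 'I_n -> bool} := [ffun q => qbit q a].
Lemma bitsv_inj : injective bitsv.
Proof.
move=> a b E; apply/val_inj; apply: bits_inj_nat (ltn_ord a) (ltn_ord b) _.
move=> q Hq; have := congr1 (fun f : {ffun 'I_n -> bool} => f (Ordinal Hq)) E.
by rewrite !ffunE.
Qed.
Lemma bitsv_bij : bijective bitsv.
Proof.
apply: inj_card_bij bitsv_inj _.
by rewrite card_ffun !card_ord card_bool.
Qed.
Definition idx : {ffun 'I_n -> bool} -> 'I_(2 ^ n) :=
  fun v => odflt (Ordinal (expn_gt0 2 n)) [pick a | bitsv a == v].
Lemma idxK v : bitsv (idx v) = v.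
Proof.
rewrite /idx; case: pickP => [a /eqP //|H].
have [g _ gK] := bitsv_bij. by have := H (g v); rewrite gK eqxx.
Qed.
Lemma bitsvK c : idx (bitsv c) = c.
Proof. by apply: bitsv_inj; rewrite idxK. Qed.

Definition xorv (f g : {ffun 'I_n -> bool}) : {ffun 'I_n -> bool} := [ffun q => f q (+) g q].
Definition xv (p : pauli n) : {ffun 'I_n -> bool} := [ffun q => p.1 ord0 q != 0].

Lemma pmatE (p : pauli n) (a b : 'I_(2 ^ n)) : pmat p a b =
  if bitsv a == xorv (bitsv b) (xv p) then \prod_q (-1) ^+ ((p.2 ord0 q != 0) && bitsv b q) else 0.
Proof.
rewrite mxE expN1_sum.
have -> : [forall q, qbit q a == qbit q b (+) (p.1 ord0 q != 0)] = (bitsv a == xorv (bitsv b) (xv p)).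
  apply/forallP/eqP => [H|H].
    by apply/ffunP => q; rewrite !ffunE; apply/eqP/H.
  move=> q; have := congr1 (fun f : {ffun 'I_n -> bool} => f q) H.
  by rewrite !ffunE => ->.
by case: eqP => // _; apply: eq_bigr => q _; rewrite ffunE.
Qed.

Lemma pmatM (p q : pauli n) : pmat p *m pmat q = sgn (\sum_i p.2 ord0 i * q.1 ord0 i) *: pmat (pmul p q).
Proof.
apply/matrixP => a b; rewrite mxE [RHS]mxE (bigD1 (idx (xorv (bitsv b) (xv q)))) //= big1 ?addr0; last first.
  move=> c Hc; rewrite (pmatE q); case: eqP => [E|]; last by rewrite mulr0.
  by move: Hc; rewrite -E bitsvK eqxx.
rewrite !pmatE idxK.
have -> : xorv (xorv (bitsv b) (xv q)) (xv p) = xorv (bitsv b) (xv (pmul p q)).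
  apply/ffunP => i; rewrite /xorv /xv !ffunE /= mxE F2addb.
  by rewrite -addbA [X in _ (+) X]addbC.
case: eqP => _; last by rewrite !mul0r mulr0.
rewrite eqxx sgn_sum -!big_split /=; apply: eq_bigr => i _.
rewrite /xorv /xv !ffunE /= !mxE F2addb /sgn F2mulb.
case: (qbit i b); case: (p.1 ord0 i != 0); case: (q.1 ord0 i != 0);
  case: (p.2 ord0 i != 0); case: (q.2 ord0 i != 0);
  by rewrite /= ?expr0 ?expr1 ?mulr1 ?mul1r ?mulrNN ?mulr1.
Qed.

Lemma F2xx (x : 'F_2) : x + x = 0.
Proof. by case: (F2cases x) => ->; apply/eqP. Qed.
Lemma F2add_eq0 (x y : 'F_2) : x + y = 0 -> x = y.
Proof. by case: (F2cases x) => ->; case: (F2cases y) => -> /eqP. Qed.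

Lemma pmul_pid (p q : pauli n) : pmul p q = pid n -> p = q.
Proof.
case: p q => [x1 z1] [x2 z2]; rewrite /pmul /pid /= => -[E1 E2].
by congr pair; apply/rowP => i; apply: F2add_eq0;
  [have := congr1 (fun v : 'rV['F_2]_n => v ord0 i) E1 | have := congr1 (fun v : 'rV['F_2]_n => v ord0 i) E2];
  rewrite !mxE.
Qed.
Lemma pmulxx (p : pauli n) : pmul p p = pid n.
Proof. by rewrite /pmul /pid; congr pair; apply/rowP => i; rewrite !mxE F2xx. Qed.
Lemma pmulC (p q : pauli n) : pmul p q = pmul q p.
Proof. by rewrite /pmul addrC [p.2 + _]addrC. Qed.

Lemma pmat0 : pmat (pid n) = 1%:M.
Proof.
apply/matrixP => a b; rewrite pmatE mxE.
have -> : xorv (bitsv b) (xv (pid n)) = bitsv b.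
  by apply/ffunP => i; rewrite /xorv /xv !ffunE /= mxE eqxx addbF.
rewrite (inj_eq (@bitsv_inj)); case: eqP => _ //.
by rewrite big1 // => i _; rewrite mxE eqxx.
Qed.

Lemma pmat_sq (p : pauli n) : pmat p *m pmat p = sgn (\sum_i p.2 ord0 i * p.1 ord0 i) *: 1%:M.
Proof. by rewrite pmatM pmulxx pmat0. Qed.

Definition a0 : 'I_(2 ^ n) := Ordinal (expn_gt0 2 n).

Lemma one_neq0 : (1%:M : cmx n) != 0.
Proof. apply/negP => /eqP/matrixP/(_ a0 a0); rewrite !mxE eqxx /=. move/eqP; by rewrite oner_eq0. Qed.

Lemma pmat_neq0 (p : pauli n) : pmat p != 0.
Proof.
apply/negP => /eqP H; have := pmat_sq p; rewrite H mul0mx => /eqP.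
by rewrite eq_sym scaler_eq0 (negbTE (sgn_neq0 _)) (negbTE one_neq0).
Qed.

Lemma pmat_scalar (r : pauli n) c : pmat r = c%:M -> r = pid n.
Proof.
move=> H.
have Hc : c != 0.
  by apply/negP => /eqP Ec; move: (pmat_neq0 r); rewrite H Ec -scalemx1 scale0r eqxx.
have Hd a : pmat r a a = c by rewrite H mxE eqxx mulr1n.
have Hx : xv r = [ffun => false].
  apply/ffunP => i; rewrite /xv !ffunE; case Hi: (r.1 ord0 i != 0) => //.
  move: (Hd (idx [ffun => false])); rewrite pmatE; case: eqP => [E|_].
    have := congr1 (fun f : {ffun 'I_n -> bool} => f i) E.
    by rewrite idxK /xorv /xv !ffunE Hi.
  by move=> E; move: Hc; rewrite -E eqxx.
have Hx' i : r.1 ord0 i = 0.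
  have := congr1 (fun f : {ffun 'I_n -> bool} => f i) Hx; rewrite !ffunE.
  by move/negbFE/eqP.
have Hxor v : xorv v (xv r) = v by apply/ffunP => i; rewrite /xorv Hx !ffunE addbF.
have E0 := Hd (idx [ffun => false]); rewrite pmatE Hxor eqxx big1 in E0; last first.
  by move=> i _; rewrite idxK ffunE andbF.
case: r Hx' Hd E0 {H Hx Hxor} => x z /= Hx' Hd E0.
congr pair; apply/rowP => i; rewrite !mxE; first exact: Hx'.
apply/eqP; apply/negPn/negP => Hi.
move: (Hd (idx [ffun q => q == i])); rewrite pmatE.
have -> : xorv (bitsv (idx [ffun q => q == i])) (xv (x, z)) = bitsv (idx [ffun q => q == i]).
  by apply/ffunP => j; rewrite /xorv /xv !ffunE /= Hx' eqxx addbF.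
rewrite eqxx (bigD1 i) //= big1; last by move=> j /negbTE Hj; rewrite idxK ffunE Hj andbF.
rewrite idxK ffunE eqxx Hi /= expr1 mulr1 -E0 => /eqP; by rewrite (negbTE N1neq1).
Qed.

Lemma pmat_prop_eq (p q : pauli n) c : pmat p = c *: pmat q -> p = q.
Proof.
move=> H; apply: pmul_pid; apply: (@pmat_scalar _ (c * sgn (\sum_i q.2 ord0 i * q.1 ord0 i) * sgn (\sum_i p.2 ord0 i * q.1 ord0 i))).
have := pmatM p q; rewrite {1}H -scalemxAl pmat_sq scalerA => E.
apply: (@scalerI _ _ (sgn (\sum_i p.2 ord0 i * q.1 ord0 i))); first exact: sgn_neq0.
rewrite -E -(scalemx1 _ (c * _ * _)) scalerA; congr (_ *: _).
by rewrite [RHS]mulrC -!mulrA sgnK mulr1.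
Qed.

Lemma pcomm_aux (p q : pauli n) :
  \sum_i p.2 ord0 i * q.1 ord0 i = pcomm p q + \sum_i q.2 ord0 i * p.1 ord0 i.
Proof.
rewrite /pcomm -big_split /=; apply: eq_bigr => i _.
by case: (F2cases (p.1 ord0 i)) => ->; case: (F2cases (p.2 ord0 i)) => ->;
  case: (F2cases (q.1 ord0 i)) => ->; case: (F2cases (q.2 ord0 i)) => ->; apply/eqP.
Qed.

Lemma pmat_comm (p q : pauli n) : pmat p *m pmat q = sgn (pcomm p q) *: (pmat q *m pmat p).
Proof. by rewrite !pmatM scalerA pmulC -sgnD -pcomm_aux. Qed.

Lemma scal_cancel (a b : algC) (M : cmx n) : M != 0 -> a *: M = b *: M -> a = b.
Proof.
move=> HM E; apply/eqP; rewrite -subr_eq0; apply/eqP.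
have : (a - b) *: M == 0 by rewrite scalerBl E subrr.
by rewrite scaler_eq0 (negbTE HM) orbF => /eqP.
Qed.

Lemma pmat_unit (q : pauli n) : pmat q *m pmat q = (sgn (\sum_i q.2 ord0 i * q.1 ord0 i))%:M.
Proof. by rewrite pmat_sq scalemx1. Qed.

Lemma conjP_eq (W : cmx n) p q c : c != 0 -> W *m pmat p *m invmx W = c *: pmat q -> conjP W p = q.
Proof.
move=> Hc E; rewrite /conjP; case: pickP => [q' /is_scalar_mxP [d Hd] | H] /=.
  apply/esym/pmul_pid; apply: (@pmat_scalar _ ((c * sgn (\sum_i q.2 ord0 i * q'.1 ord0 i))^-1 * d)).
  move: Hd; rewrite E -scalemxAl pmatM scalerA => Hd.
  rewrite -scalemx1 -scalerA scalemx1 -Hd scalerA mulVf ?scale1r //.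
  by rewrite mulf_neq0 // sgn_neq0.
exfalso; move: (H q) => /negP; apply; apply/is_scalar_mxP.
exists (c * sgn (\sum_i q.2 ord0 i * q.1 ord0 i)).
by rewrite E -scalemxAl pmat_unit -(scalemx1 _ (c * _)) -(scalemx1 _ (sgn _)) scalerA.
Qed.

Definition good (W : cmx n) := W \in unitmx /\
  forall p, exists q, exists2 c, c != 0 & W *m pmat p *m invmx W = c *: pmat q.

Lemma good_spec W p : good W ->
  exists2 c, c != 0 & W *m pmat p *m invmx W = c *: pmat (conjP W p).
Proof. case=> _ /(_ p) [q [c Hc E]]; exists c => //; by rewrite (@conjP_eq W p q c Hc E). Qed.

Lemma invmx_uniq (A B : cmx n) : A \in unitmx -> A *m B = 1%:M -> invmx A = B.
Proof. by move=> HA E; rewrite -[RHS]mul1mx -(mulVmx HA) -mulmxA E mulmx1. Qed.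

Lemma conj_mul {W : cmx n} (A B : cmx n) : W \in unitmx ->
  W *m (A *m B) *m invmx W = (W *m A *m invmx W) *m (W *m B *m invmx W).
Proof. by move=> HW; rewrite !mulmxA mulmxKV. Qed.

Lemma good1 : good 1%:M.
Proof.
split; first exact: unitmx1.
by move=> p; exists p; exists 1; rewrite ?oner_eq0 // invmx1 mul1mx mulmx1 scale1r.
Qed.

Lemma goodM U V : good U -> good V -> good (U *m V).
Proof.
move=> [HU GU] [HV GV]; have HUV : U *m V \in unitmx by rewrite unitmx_mul HU HV.
split => // p.
have Einv : invmx (U *m V) = invmx V *m invmx U.
  apply: invmx_uniq => //; by rewrite mulmxA mulmxK // mulmxV.
have [q1 [c1 Hc1 E1]] := GV p; have [q2 [c2 Hc2 E2]] := GU q1.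
exists q2; exists (c1 * c2); first by rewrite mulf_neq0.
rewrite Einv.
have -> : U *m V *m pmat p *m (invmx V *m invmx U) = U *m (V *m pmat p *m invmx V) *m invmx U.
  by rewrite !mulmxA.
by rewrite E1 -scalemxAr -scalemxAl E2 scalerA.
Qed.

Lemma clifford_good U : clifford U -> good U.
Proof.
move=> [HU GU]; have HUu : U \in unitmx by case: (mulmx1_unit HU).
split => // p; have [q /is_scalar_mxP [d Hd]] := GU p.
have E : (U *m pmat p *m invmx U) *m (pmat q *m pmat q) = d *: pmat q.
  by rewrite mulmxA Hd mul_scalar_mx.
rewrite pmat_unit mul_mx_scalar in E.
exists q; exists (d * sgn (\sum_i q.2 ord0 i * q.1 ord0 i)); last first.
  rewrite -[LHS]scale1r -(sgnK (\sum_i q.2 ord0 i * q.1 ord0 i)) -scalerA E.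
  by rewrite scalerA mulrC.
rewrite mulf_neq0 ?sgn_neq0 //; apply/negP => /eqP Ed.
move: E; rewrite Ed scale0r => /eqP; rewrite scaler_eq0 (negbTE (sgn_neq0 _)) /= => /eqP H0.
have : invmx U *m (U *m pmat p *m invmx U) *m U = pmat p.
  by rewrite !mulmxA mulVmx // mul1mx mulmxKV.
by rewrite H0 mulmx0 mul0mx => /esym/eqP; rewrite (negbTE (pmat_neq0 p)).
Qed.

Lemma good_add W p p' : good W ->
  conjP W (pmul p p') = pmul (conjP W p) (conjP W p').
Proof.
move=> GW; have [c Hc E] := good_spec W p GW; have [c' Hc' E'] := good_spec W p' GW.
set s := sgn (\sum_i p.2 ord0 i * p'.1 ord0 i).
set s' := sgn (\sum_i (conjP W p).2 ord0 i * (conjP W p').1 ord0 i).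
apply: (@conjP_eq _ _ _ (s * (c * c') * s')).
  by rewrite !mulf_neq0 ?sgn_neq0.
have Hp : pmat (pmul p p') = s *: (pmat p *m pmat p').
  by rewrite pmatM scalerA sgnK scale1r.
rewrite Hp -scalemxAr -scalemxAl conj_mul; last by case: GW.
rewrite E E' -scalemxAl -scalemxAr scalerA pmatM !scalerA; congr (_ *: _).
by rewrite !mulrA.
Qed.

Lemma scal_mul2 (a b : algC) (A B : cmx n) : (a *: A) *m (b *: B) = (a * b) *: (A *m B).
Proof. by rewrite -scalemxAl -scalemxAr scalerA. Qed.

Lemma comm_transfer (W A B Q Q' : cmx n) (c c' s t : algC) :
  W \in unitmx -> c != 0 -> c' != 0 -> Q' *m Q != 0 ->
  A *m B = s *: (B *m A) -> Q *m Q' = t *: (Q' *m Q) ->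
  W *m A *m invmx W = c *: Q -> W *m B *m invmx W = c' *: Q' -> s = t.
Proof.
move=> HW Hc Hc' HQ EAB EQ EA EB.
have := congr1 (fun M => W *m M *m invmx W) EAB.
rewrite /= -scalemxAr -scalemxAl (conj_mul A B HW) (conj_mul B A HW) EA EB.
rewrite !scal_mul2 EQ scalerA scalerA => H.
have E2 := @scal_cancel _ _ _ HQ H.
apply: (mulIf (mulf_neq0 Hc Hc')).
by rewrite [RHS]mulrC E2 [c' * c]mulrC.
Qed.

Lemma good_comm W p p' : good W ->
  pcomm (conjP W p) (conjP W p') = pcomm p p'.
Proof.
move=> GW; have HW : W \in unitmx by case: GW.
have [c Hc E] := good_spec W p GW; have [c' Hc' E'] := good_spec W p' GW.
have HQ : pmat (conjP W p') *m pmat (conjP W p) != 0.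
  by rewrite pmatM scaler_eq0 negb_or sgn_neq0 pmat_neq0.
have := @comm_transfer W _ _ _ _ _ _ _ _ HW Hc Hc' HQ (pmat_comm p p') (pmat_comm (conjP W p) (conjP W p')) E E'.
by move/sgn_inj.
Qed.
Lemma inv_transfer (U P Q : cmx n) c : U \in unitmx ->
  U *m P *m invmx U = c *: Q -> c *: (invmx U *m Q *m U) = P.
Proof. by move=> HU E; rewrite scalemxAl scalemxAr -E !mulmxA mulVmx // mul1mx mulmxKV. Qed.

Lemma good_inv U p : good U -> conjP (invmx U) (conjP U p) = p.
Proof.
move=> GU; have HU : U \in unitmx by case: GU.
have [c Hc E] := good_spec U p GU.
apply: (@conjP_eq _ _ _ c^-1); first by rewrite invr_eq0.
rewrite invmxK; apply: (@scalerI _ _ c) => //.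
rewrite scalerA mulfV // scale1r; exact: inv_transfer HU E.
Qed.

Lemma good_adj U p q : good U ->
  pcomm (conjP U p) q = pcomm p (conjP (invmx U) q).
Proof.
move=> GU.
have can1 : cancel (conjP U) (conjP (invmx U)) by move=> x; exact: good_inv.
have bij : bijective (conjP U) by apply: (@injF_bij (pauli n)); exact: can_inj can1.
have can2 : cancel (conjP (invmx U)) (conjP U) by apply/(bij_can_sym bij).
by rewrite -{1}(can2 q) good_comm.
Qed.
End Bits.
Section PC.
Variable n : nat.
Implicit Types p q : pauli n.
Lemma pcommDl p p' q : pcomm (pmul p p') q = pcomm p q + pcomm p' q.
Proof.
rewrite /pcomm -big_split /=; apply: eq_bigr => i _; rewrite !mxE.
by rewrite !mulrDl addrACA.
Qed.
Lemma pcommDr p q q' : pcomm p (pmul q q') = pcomm p q + pcomm p q'.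
Proof.
rewrite /pcomm -big_split /=; apply: eq_bigr => i _; rewrite !mxE.
by rewrite !mulrDr addrACA.
Qed.
Lemma pcomm0r p : pcomm p (pid n) = 0.
Proof. by rewrite /pcomm big1 // => i _; rewrite !mxE !mulr0 addr0. Qed.
Lemma pcommZr p q a : pcomm p (ppow q a) = a * pcomm p q.
Proof.
rewrite /pcomm mulr_sumr; apply: eq_bigr => i _; rewrite !mxE.
by rewrite mulrDr (mulrCA (p.1 ord0 i)) (mulrCA (p.2 ord0 i)).
Qed.
End PC.

Lemma telescope n D (cum B F G : nat -> pauli n) (T T' : nat -> pauli n -> pauli n) :
  cum 0%N = F 0%N -> (forall k, cum k.+1 = pmul (F k.+1) (T k.+1 (cum k))) ->
  B D = G D -> (forall k, (k < D)%N -> B k = pmul (G k) (T' k.+1 (B k.+1))) ->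
  (forall k p q, pcomm p (T' k q) = pcomm (T k p) q) ->
  \sum_(i < D.+1) pcomm (F i) (B i) = \sum_(i < D.+1) pcomm (cum i) (G i).
Proof.
move=> c0 cS BD BS adj.
have claim k : (k <= D)%N -> \sum_(i < k.+1) pcomm (F i) (B i) =
    \sum_(i < k) pcomm (cum i) (G i) + pcomm (cum k) (B k).
  elim: k => [_|k IH Hk].
    by rewrite big_ord1 big_ord0 add0r c0.
  rewrite big_ord_recr /= IH ?(ltnW Hk) // big_ord_recr /= BS // pcommDr adj.
  by rewrite cS pcommDl -!addrA [pcomm (T _ _) _ + _]addrC.
by rewrite claim // BD big_ord_recr.
Qed.

Lemma foldl_good n l (C : circuit n) (acc : cmx n) : good n acc ->
  (forall i, (i < size C)%N -> forall U, (nth (Gate 1%:M, 0%N) C i).1 = Gate U -> clifford U) ->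
  good n (foldl (fun acc o => match o with
                      | (Gate U, l') => if l' == l then U *m acc else acc
                      | _ => acc end) acc C).
Proof.
elim: C acc => [|x C IH] acc Gacc H //=.
apply: IH => [|i Hi U E]; last exact: (H i.+1 Hi U E).
case: x H => [[U|s P] l'] H //=.
case: eqP => _ //; apply: goodM => //; apply: clifford_good; exact: (H 0%N).
Qed.

Lemma Ulev_good n (C : circuit n) l :
  (forall i, (i < size C)%N -> forall U, (nth (Gate 1%:M, 0%N) C i).1 = Gate U -> clifford U) ->
  good n (Ulev C l).
Proof. move=> H; exact: foldl_good (good1 n) H. Qed.

Lemma measL_le n (C : circuit n) j : (j < nmeas C)%N -> (measL C j <= depth C)%N.
Proof.
rewrite /nmeas /measL /depth /meas.
elim: C j => [|x C IH] j //=.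
rewrite big_cons; case: x => [[U|s P] l] /=.
  by move=> Hj; apply: leq_trans (IH j Hj) (leq_maxr _ _).
case: j => [|j] /= Hj; first exact: leq_maxl.
exact: leq_trans (IH j Hj) (leq_maxr _ _).
Qed.

Theorem mainTheorem19 (n : nat) (C : circuit n) (F : fault n (depth C))
    (u : 'rV['F_2]_(nmeas C)) :
  wf_circuit C ->
  linear_code (outcome_code C) ->
  in_perp (outcome_code C) u ->
  \sum_(j < nmeas C)
     u ord0 j * pcomm (cumulant C F (inord (measL C j).-1)) (measP C j)
  = fcomm F (backcumulant C (faultOf C u)).
Proof.
move=> [_ _ Hcl _] _ _.
have HG l : good n (Ulev C l).
  by apply: Ulev_good => i Hi U E; exact: (Hcl (Ordinal Hi) U E).
pose Fn := fun k => F (inord k).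
pose Gn := fun k => faultOf C u (inord k).
have R1 : fcomm F (backcumulant C (faultOf C u)) =
    \sum_(i < (depth C).+1) pcomm (Fn i) (bkn C Gn (depth C - i)).
  by rewrite /fcomm; apply: eq_bigr => i _; rewrite ffunE /Fn inord_val.
rewrite R1 (@telescope n (depth C) (cumn C Fn) (fun k => bkn C Gn (depth C - k)) Fn Gn
   (fun l => conjP (Ulev C l)) (fun l => conjP (invmx (Ulev C l)))) //; last first.
- by move=> k p q /=; rewrite (good_adj _ _ _ _ (HG k)).
- move=> k Hk /=.
  have -> : (depth C - k = (depth C - k.+1).+1)%N by lia.
  rewrite /=.
  have -> : (depth C - (depth C - k.+1).+1 = k)%N by lia.
  by have -> : (depth C - (depth C - k.+1) = k.+1)%N by lia.
- by rewrite subnn.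
have R2 (i : 'I_(depth C).+1) : pcomm (cumn C Fn i) (Gn i) =
    \sum_(j < nmeas C | (measL C j).-1 == i) u ord0 j * pcomm (cumn C Fn i) (measP C j).
  rewrite /Gn inord_val ffunE.
  rewrite (big_morph (pcomm (cumn C Fn i)) (@pcommDr n (cumn C Fn i)) (@pcomm0r n _)).
  by apply: eq_bigr => j _; rewrite pcommZr.
rewrite (eq_bigr _ (fun i _ => R2 i)).
rewrite (exchange_big_dep xpredT) //=.
apply: eq_bigr => j _.
have Hb : ((measL C j).-1 < (depth C).+1)%N.
  by rewrite ltnS; exact: leq_trans (leq_pred _) (@measL_le n C j (ltn_ord j)).
rewrite (big_pred1 (inord (measL C j).-1)); first by rewrite ffunE.
move=> i /=; rewrite -(inj_eq val_inj) /= inordK // eq_sym.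
Qed.
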